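(* Let $(A,\ast,\alpha)$ be a nearly Hom-associative algebra over a field $\mathbb{K}$ of characteristic $0$. Then $(A,[\cdot,\cdot],\alpha)$ is a Hom-Lie algebra, where $[x,y]=x\ast y-y\ast x$ for all $x,y\in A$.
   Context: A nearly Hom-associative algebra is a triple $(A,\ast,\alpha)$ with $A$ a linear space, $\ast:A\times A\to A$ bilinear and $\alpha:A\to A$ linear, such that $\alpha(x)\ast(y\ast z)=(z\ast x)\ast\alpha(y)$ for all $x,y,z\in A$. A Hom-Lie algebra is a triple $(A,[\cdot,\cdot],\alpha)$ with $[\cdot,\cdot]$ bilinear and $\alpha$ linear such that $[x,y]=-[y,x]$ and $[\alpha(x),[y,z]]+[\alpha(y),[z,x]]+[\alpha(z),[x,y]]=0$ for all $x,y,z$. *)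

(* Defs.v *)
From mathcomp Require Import all_boot all_algebra.
Set Implicit Arguments. Unset Strict Implicit. Unset Printing Implicit Defensive.
Import GRing.Theory.
Local Open Scope ring_scope.

Definition bilinear_op (K : fieldType) (A : lmodType K) (m : A -> A -> A) : Prop :=
  (forall (a : K) (x y z : A), m (a *: x + y) z = a *: m x z + m y z) /\
  (forall (a : K) (x y z : A), m x (a *: y + z) = a *: m x y + m x z).

Definition linear_map (K : fieldType) (A : lmodType K) (f : A -> A) : Prop :=
  forall (a : K) (x y : A), f (a *: x + y) = a *: f x + f y.

Definition nearly_hom_assoc (K : fieldType) (A : lmodType K)
  (ast : A -> A -> A) (alpha : A -> A) : Prop :=
  [/\ bilinear_op ast, linear_map alpha &
      forall x y z : A, ast (alpha x) (ast y z) = ast (ast z x) (alpha y)].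

Definition hom_lie (K : fieldType) (A : lmodType K)
  (br : A -> A -> A) (alpha : A -> A) : Prop :=
  [/\ bilinear_op br, linear_map alpha,
      (forall x y : A, br x y = - br y x) &
      (forall x y z : A, br (alpha x) (br y z) + br (alpha y) (br z x)
                         + br (alpha z) (br x y) = 0)].

Definition commutator_op (A : zmodType) (ast : A -> A -> A) : A -> A -> A :=
  fun x y => ast x y - ast y x.

(* Main.v *)
Require Import Defs.
From mathcomp Require Import all_boot all_algebra.
Local Open Scope ring_scope.
Import GRing.Theory.


Lemma swap4 (V : zmodType) (u v w t : V) : u - v - (w - t) = (u - w) - (v - t).
Proof. by rewrite !opprB addrACA [RHS]addrACA (addrC (-v)). Qed.

Lemma cyc3 (V : zmodType) (x y z : V) : x - y + (z - x) + (y - z) = 0.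
Proof. by rewrite addrAC -(addrA x) addKr addrA subrK subrr. Qed.

Lemma cyc3' (V : zmodType) (x y z : V) : x - y + (y - z) + (z - x) = 0.
Proof. by rewrite (addrA (x - y)) subrK addrA subrK subrr. Qed.

Lemma sum3 (V : zmodType) (p q r s u v : V) :
  p - q + (r - s) + (u - v) = (p + r + u) - (q + s + v).
Proof. by rewrite (addrACA p (-q)) (addrACA (p + r)) -!opprD. Qed.

Lemma jac6 (V : zmodType) (a b c d e f : V) :
  a - b - (c - d) + (e - d - (a - f)) + (c - f - (e - b)) = 0.
Proof.
by rewrite (swap4 _ a) (swap4 _ e) (swap4 _ c) sum3 cyc3 cyc3' subrr.
Qed.

Theorem mainTheorem10 (K : fieldType) (A : lmodType K)
  (ast : A -> A -> A) (alpha : A -> A) :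
  [pchar K] =i pred0 ->
  nearly_hom_assoc ast alpha ->
  hom_lie (commutator_op ast) alpha.
Proof.
move=> _ [[bl br] lin key].
have subl : forall x y z, ast (x - y) z = ast x z - ast y z.
  move=> x y z; have := bl (-1) y x z; rewrite !scaleN1r addrC => ->.
  by rewrite addrC.
have subr : forall x y z, ast z (x - y) = ast z x - ast z y.
  move=> x y z; have := br (-1) z y x; rewrite !scaleN1r addrC => ->.
  by rewrite addrC.
have key' : forall a b c, ast (ast c a) (alpha b) = ast (alpha a) (ast b c).
  by move=> *; rewrite key.
rewrite /commutator_op; split.
- split=> a x y z.
  + by rewrite bl br scalerBr opprD addrACA.
  + by rewrite bl br scalerBr opprD addrACA.
- exact: lin.
- by move=> x y; rewrite opprB.
- move=> x y z; rewrite !subl !subr !key'.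
  exact: jac6.
Qed.
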